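(* Let $z\in\mathbb{D}^*$ and suppose that there are points $p\in f\Lambda_z$ and $q\in g\Lambda_z$ with $|p-q|=\delta$. Then the closed $\delta/2$-neighbourhood $\{x\in\mathbb{C}:d(x,\Lambda_z)\le\delta/2\}$ of $\Lambda_z$ is path connected.
   Context: For $z\in\mathbb{D}^*=\{0<|z|<1\}$, $f(x)=zx$, $g(x)=z(x-1)+1$, $\Lambda_z$ is the unique nonempty compact subset of $\mathbb{C}$ with $\Lambda_z=f(\Lambda_z)\cup g(\Lambda_z)$, and $f\Lambda_z=f(\Lambda_z)$, $g\Lambda_z=g(\Lambda_z)$. *)

(* Defs.v *)
From HB Require Import structures.
From mathcomp Require Import all_boot all_order all_algebra.
From mathcomp Require Import all_classical all_reals all_analysis.
From mathcomp Require Import complex.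
Import Order.TTheory GRing.Theory Num.Theory.
Import numFieldNormedType.Exports.

Set Implicit Arguments.
Unset Strict Implicit.
Unset Printing Implicit Defensive.

Local Open Scope classical_set_scope.
Local Open Scope ring_scope.

Definition Cplx (R : realType) := ((R[i])^o)%type.

Definition cabs (R : realType) (x : Cplx R) : R := Normc.normc x.

Definition ifs_f (R : realType) (z : Cplx R) (x : Cplx R) : Cplx R := z * x.
Definition ifs_g (R : realType) (z : Cplx R) (x : Cplx R) : Cplx R :=
  z * (x - 1) + 1.

Definition dist_set (R : realType) (x : Cplx R) (A : set (Cplx R)) : R :=
  inf [set cabs (x - y) | y in A].

Definition path_connected (R : realType) (A : set (Cplx R)) : Prop :=
  forall x y, A x -> A y ->
  exists gamma : R -> Cplx R,
    {within `[0, 1]%classic, continuous gamma} /\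
    gamma 0 = x /\ gamma 1 = y /\
    (forall t, `[0, 1]%classic t -> A (gamma t)).

(* Main.v *)
Set Warnings "-notation-overridden,-ambiguous-paths,-notation-incompatible-prefix".
Require Import Defs.
From HB Require Import structures.
From mathcomp Require Import all_boot all_order all_algebra.
From mathcomp Require Import all_classical all_reals all_analysis.
From mathcomp Require Import complex.
From mathcomp Require Import lra ring.
Import Order.TTheory GRing.Theory Num.Theory.
Import numFieldNormedType.Exports.
Local Open Scope classical_set_scope.
Local Open Scope ring_scope.
Set Implicit Arguments.
Unset Strict Implicit.
Unset Printing Implicit Defensive.

Section Basics.
Variable R : realType.
Local Notation Cx := (Cplx R).

Lemma cabs_ge0 (w : Cx) : 0 <= cabs w.
Proof. by case: w => a b; rewrite /cabs /= sqrtr_ge0. Qed.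

Lemma cabsM (a b : Cx) : cabs (a * b) = cabs a * cabs b.
Proof. exact: Normc.normcM. Qed.

Lemma cabsD (a b : Cx) : cabs (a + b) <= cabs a + cabs b.
Proof. exact: le_normcD. Qed.

Lemma cabsN (a : Cx) : cabs (- a) = cabs a.
Proof. exact: normcN. Qed.

Lemma cabsB (a b : Cx) : cabs (a - b) = cabs (b - a).
Proof. by rewrite -cabsN opprB. Qed.

Lemma cabs0 : cabs (0 : Cx) = 0.
Proof. exact: Normc.normc0. Qed.

Lemma cabs_eq0 (a : Cx) : cabs a = 0 -> a = 0.
Proof. exact: Normc.eq0_normc. Qed.

Lemma cabs_real (k : R) : cabs ((Complex k 0 : R[i]) : Cx) = `|k|.
Proof. by rewrite /cabs /= expr0n /= addr0 sqrtr_sqr. Qed.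

Lemma cabs_Re (w : Cx) : `|complex.Re (w : R[i])| <= cabs w.
Proof.
case: w => a b /=; rewrite /cabs /= -sqrtr_sqr ler_sqrt ?addr_ge0 ?sqr_ge0 //.
by rewrite lerDl sqr_ge0.
Qed.

Lemma cabs_Im (w : Cx) : `|complex.Im (w : R[i])| <= cabs w.
Proof.
case: w => a b /=; rewrite /cabs /= -sqrtr_sqr ler_sqrt ?addr_ge0 ?sqr_ge0 //.
by rewrite lerDr sqr_ge0.
Qed.

Lemma cabs_le_ReIm (w : Cx) : cabs w <= (`|complex.Re (w : R[i])| + `|complex.Im (w : R[i])| : R).
Proof.
case: w => a b /=; rewrite /cabs /=.
have H : a^+2 + b^+2 <= (`|a| + `|b|)^+2.
  rewrite sqrrD -(real_normK (num_real a)) -(real_normK (num_real b)).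
  rewrite -addrA lerD2l lerDr; apply: mulrn_wge0; exact: mulr_ge0.
apply: le_trans (ler_wsqrtr H) _.
by rewrite sqrtr_sqr ger0_norm // addr_ge0.
Qed.

Lemma norm_cabs (w : Cx) : (`|w| : R[i]) = Complex (cabs w) 0.
Proof. by case: w => a b; rewrite normc_def. Qed.

Lemma ReB (a b : Cx) : complex.Re ((a - b : Cx) : R[i]) = complex.Re (a : R[i]) - complex.Re (b : R[i]).
Proof. by case: a => ? ?; case: b. Qed.
Lemma ImB (a b : Cx) : complex.Im ((a - b : Cx) : R[i]) = complex.Im (a : R[i]) - complex.Im (b : R[i]).
Proof. by case: a => ? ?; case: b. Qed.

Lemma absP (x : R) : x <= `|x| /\ - x <= `|x|.
Proof. by split; [exact: ler_norm| rewrite -normrN; exact: ler_norm]. Qed.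

Lemma lip_min (a b c : R) : `|Num.min a c - Num.min b c| <= `|a - b|.
Proof.
have [h1 h2] := absP (a - b).
case: (leP a c) => ?; case: (leP b c) => ?; rewrite ler_norml; apply/andP; split; lra.
Qed.

Lemma lip_max (a b c : R) : `|Num.max a c - Num.max b c| <= `|a - b|.
Proof.
have [h1 h2] := absP (a - b).
case: (leP a c) => ?; case: (leP b c) => ?; rewrite ler_norml; apply/andP; split; lra.
Qed.

Definition ccont (h : R -> Cx) := forall t0 e, 0 < e ->
  exists2 d, 0 < d & forall t, `|t - t0| < d -> cabs (h t - h t0) < e.

Lemma ccont_cst (c : Cx) : ccont (fun _ => c).
Proof. move=> t0 e e0; exists 1 => // t _; by rewrite subrr cabs0. Qed.

Lemma ccontD (f g : R -> Cx) : ccont f -> ccont g -> ccont (fun t => f t + g t).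
Proof.
move=> cf cg t0 e e0.
have e2 : 0 < e / 2 by rewrite divr_gt0.
have [d1 d10 H1] := cf t0 _ e2; have [d2 d20 H2] := cg t0 _ e2.
exists (Num.min d1 d2); first by rewrite lt_min d10 d20.
move=> t; rewrite lt_min => /andP[t1 t2].
have -> : f t + g t - (f t0 + g t0) = (f t - f t0) + (g t - g t0) by rewrite opprD addrACA.
apply: le_lt_trans (cabsD _ _) _.
have := H1 _ t1; have := H2 _ t2; lra.
Qed.

Lemma ccontM (c : Cx) (f : R -> Cx) : ccont f -> ccont (fun t => c * f t).
Proof.
move=> cf t0 e e0.
have c0 : 0 < cabs c + 1 by have := cabs_ge0 c; lra.
have e2 : 0 < e / (cabs c + 1) by rewrite divr_gt0.
have [d d0 H] := cf t0 _ e2; exists d => // t /H Ht.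
rewrite -mulrBr cabsM.
have := cabs_ge0 c; have := cabs_ge0 (f t - f t0) => g1 g2.
have : cabs c * cabs (f t - f t0) <= cabs c * (e / (cabs c + 1)).
  by rewrite ler_wpM2l // ltW.
have : cabs c * (e / (cabs c + 1)) < e.
  rewrite mulrA ltr_pdivrMr // mulrDr mulr1; lra.
lra.
Qed.

Lemma ccont_comp (f : R -> Cx) (phi : R -> R) (k : R) : ccont f -> 0 < k ->
  (forall s t, `|phi s - phi t| <= k * `|s - t|) -> ccont (fun t => f (phi t)).
Proof.
move=> cf k0 Hphi t0 e e0.
have [d d0 H] := cf (phi t0) _ e0.
exists (d / k); first by rewrite divr_gt0.
move=> t Ht; apply: H; apply: le_lt_trans (Hphi _ _) _.
by rewrite -ltr_pdivlMl // mulrC.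
Qed.

Definition rC (t : R) : Cx := Complex t 0.

Lemma rCB (s t : R) : rC s - rC t = rC (s - t).
Proof. by rewrite /rC; apply/eqP; rewrite eq_complex /= subr0 !eqxx. Qed.

Lemma ccont_rC (c : Cx) : ccont (fun t => rC t * c).
Proof.
move=> t0 e e0.
have c0 : 0 < cabs c + 1 by have := cabs_ge0 c; lra.
exists (e / (cabs c + 1)); first by rewrite divr_gt0.
move=> t Ht; rewrite -mulrBl rCB cabsM cabs_real.
have := cabs_ge0 c; have := normr_ge0 (t - t0) => g1 g2.
rewrite ltr_pdivlMr // in Ht.
have : `|t - t0| * cabs c <= `|t - t0| * (cabs c + 1) by rewrite ler_wpM2l //; lra.
lra.
Qed.

Definition concat (h1 h2 : R -> Cx) (t : R) : Cx :=
  h1 (Num.min (2 * t) 1) + h2 (Num.max (2 * t - 1) 0) - h1 1.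

Lemma concat0 h1 h2 : h1 1 = h2 0 -> concat h1 h2 0 = h1 0.
Proof.
move=> e; rewrite /concat mulr0 sub0r.
have -> : Num.min (0:R) 1 = 0 by apply/min_idPl; exact: ler01.
have -> : Num.max (-1:R) 0 = 0 by apply/max_idPr; rewrite lerN10.
by rewrite -e addrK.
Qed.

Lemma concat1 h1 h2 : concat h1 h2 1 = h2 1.
Proof.
rewrite /concat mulr1.
have -> : Num.min (2:R) 1 = 1 by apply/min_idPr; lra.
have -> : Num.max (2 - 1:R) 0 = 1 by rewrite (_ : 2 - 1 = 1 :> R); [apply/max_idPl; lra| lra].
by rewrite addrC addKr.
Qed.

Lemma concat_split (t : R) : 0 <= t <= 1 ->
  exists2 s, 0 <= s <= 1 &
   ((forall h1 h2, h1 1 = h2 0 -> concat h1 h2 t = h1 s) \/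
    (forall h1 h2, concat h1 h2 t = h2 s)).
Proof.
move=> /andP[t0 t1].
case: (leP t (1/2)) => th.
- exists (2 * t); first by apply/andP; split; lra.
  left => h1 h2 e; rewrite /concat.
  have -> : Num.min (2 * t) 1 = 2 * t by apply/min_idPl; lra.
  have -> : Num.max (2 * t - 1) 0 = 0 by apply/max_idPr; lra.
  by rewrite e addrK.
- exists (2 * t - 1); first by apply/andP; split; lra.
  right => h1 h2; rewrite /concat.
  have -> : Num.min (2 * t) 1 = 1 by apply/min_idPr; lra.
  have -> : Num.max (2 * t - 1) 0 = 2 * t - 1 by apply/max_idPl; lra.
  by rewrite addrC addKr.
Qed.

Lemma ccont_concat h1 h2 : ccont h1 -> ccont h2 -> ccont (concat h1 h2).
Proof.
move=> c1 c2; rewrite /concat.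
apply: ccontD; last exact: ccont_cst.
apply: ccontD.
- apply: (@ccont_comp _ _ 2 c1) => // s t.
  apply: le_trans (lip_min _ _ _) _; rewrite -mulrBr normrM ger0_norm //.
- apply: (@ccont_comp _ _ 2 c2) => // s t.
  apply: le_trans (lip_max _ _ _) _.
  rewrite opprB addrA subrK -mulrBr normrM ger0_norm //.
Qed.


Lemma ccont_continuous (h : R -> Cx) : ccont h -> continuous h.
Proof.
move=> ch t0; apply/cvgrPdist_lt => e e0.
move: e0; rewrite ltcE /= => /andP[/eqP eI e0].
have [d d0 H] := ch t0 _ e0.
apply/nbhs_ballP; exists d => // t Ht; move: Ht; rewrite /ball /=.
move=> Ht; rewrite norm_cabs ltcE /= eI eqxx /= cabsB.
by apply: H; rewrite distrC.
Qed.

Lemma lip_continuous (phi : Cx -> R) :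
  (forall a b, `|phi a - phi b| <= cabs (a - b)) -> continuous phi.
Proof.
move=> H x; apply: (proj2 (@cvgrPdist_lt _ _ _ (nbhs x) _ phi (phi x))) => e e0.
apply/nbhs_ballP; exists (Complex e 0); first by rewrite /= ltcE /= eqxx e0.
move=> y; rewrite /ball /= norm_cabs ltcE /= => /andP[_ h].
exact: le_lt_trans (H _ _) h.
Qed.


Lemma geo_small (q e : R) : 0 <= q -> q < 1 -> 0 < e -> exists n, q ^+ n < e.
Proof.
move=> q0 q1 e0.
have : `|q| < 1 by rewrite ger0_norm.
move=> /cvg_expr /cvgrPdist_lt /(_ e e0) [N _ HN].
exists N; have := HN N (leqnn N); rewrite /= sub0r normrN ger0_norm //.
exact: exprn_ge0.
Qed.

Definition rlim (q C : R) (a : nat -> R) : R :=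
  sup [set a n - C * q ^+ n | n in setT].

Lemma rlimP (q C : R) (a : nat -> R) : 0 <= q -> q <= 1 -> 0 <= C ->
  (forall n m, (n <= m)%N -> `|a m - a n| <= C * q ^+ n) ->
  forall n, `|rlim q C a - a n| <= C * q ^+ n.
Proof.
move=> q0 q1 C0 H.
have ub n m : a n - C * q ^+ n <= a m + C * q ^+ m.
  have g1 : 0 <= C * q ^+ n by rewrite mulr_ge0 // exprn_ge0.
  have g2 : 0 <= C * q ^+ m by rewrite mulr_ge0 // exprn_ge0.
  case: (leqP n m) => nm.
    have := H _ _ nm; rewrite ler_norml => /andP[h1 h2]; lra.
  have := H _ _ (ltnW nm); rewrite ler_norml => /andP[h1 h2]; lra.
set S := [set a n - C * q ^+ n | n in setT].
have S0 : S !=set0 by exists (a 0%N - C * q ^+ 0); exists 0%N.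
have ubS m : ubound S (a m + C * q ^+ m) by move=> x [k _ <-]; exact: ub.
have hs : has_sup S by split => //; exists (a 0%N + C * q ^+ 0); exact: ubS.
move=> n; rewrite ler_norml.
have h1 := ge_sup S0 (ubS n).
have h2 : a n - C * q ^+ n <= sup S by apply: sup_upper_bound => //; exists n.
rewrite /rlim -/S; apply/andP; split; lra.
Qed.

Definition climit (q C : R) (u : nat -> Cx) : Cx :=
  Complex (rlim q C (fun n => complex.Re (u n : R[i])))
          (rlim q C (fun n => complex.Im (u n : R[i]))).

Lemma climitP (q C : R) (u : nat -> Cx) : 0 <= q -> q <= 1 -> 0 <= C ->
  (forall n m, (n <= m)%N -> cabs (u m - u n) <= C * q ^+ n) ->
  forall n, cabs (climit q C u - u n) <= C * q ^+ n + C * q ^+ n.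
Proof.
move=> q0 q1 C0 H n.
apply: le_trans (cabs_le_ReIm _) _; rewrite ReB ImB /=.
apply: lerD; apply: rlimP => // k m km.
- by rewrite -ReB; apply: le_trans (cabs_Re _) _; exact: H.
- by rewrite -ImB; apply: le_trans (cabs_Im _) _; exact: H.
Qed.

End Basics.

Section Main.
Variable R : realType.
Local Notation Cx := (Cplx R).
Variables (z : Cx) (L : set Cx) (p q : Cx) (delta K : R).
Hypothesis hz0 : 0 < cabs z.
Hypothesis hz1 : cabs z < 1.
Hypothesis Lf : forall y, L y -> L (ifs_f z y).
Hypothesis Lg : forall y, L y -> L (ifs_g z y).
Hypothesis Lfg : forall x, L x -> L (x / z) \/ L ((x - 1) / z + 1).
Hypothesis hpL : L (p / z).
Hypothesis hqL : L ((q - 1) / z + 1).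
Hypothesis hpq : cabs (p - q) = delta.
Hypothesis hK : forall y, L y -> cabs y <= K.
Hypothesis hK0 : 0 <= K.

Local Notation qz := (cabs z).

Lemma z_neq0 : z != 0.
Proof. by apply/eqP => z0; move: hz0; rewrite z0 cabs0 ltxx. Qed.

Lemma fK x : ifs_f z (x / z) = x.
Proof. by rewrite /ifs_f mulrC divfK // z_neq0. Qed.

Lemma gK x : ifs_g z ((x - 1) / z + 1) = x.
Proof. by rewrite /ifs_g addrK mulrC divfK ?z_neq0 // subrK. Qed.

Lemma cabs_fB a b : cabs (ifs_f z a - ifs_f z b) = qz * cabs (a - b).
Proof. by rewrite /ifs_f -mulrBr cabsM. Qed.

Lemma cabs_gB a b : cabs (ifs_g z a - ifs_g z b) = qz * cabs (a - b).
Proof.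
have -> : ifs_g z a - ifs_g z b = z * (a - b) by rewrite /ifs_g; ring.
by rewrite cabsM.
Qed.

Lemma delta0 : 0 <= delta.
Proof. rewrite -hpq; exact: cabs_ge0. Qed.

Lemma pL : L p.
Proof. by rewrite -(fK p); exact: Lf. Qed.
Lemma qL : L q.
Proof. by rewrite -(gK q); exact: Lg. Qed.

Definition NB (r : R) (w : Cx) :=
  forall e, 0 < e -> exists y, L y /\ cabs (w - y) <= r + e.

Lemma NB_mono r r' w : r <= r' -> NB r w -> NB r' w.
Proof.
move=> rr H e e0; have [y [Ly Hy]] := H e e0; exists y; split => //; lra.
Qed.

Lemma NB_f r w : NB r w -> NB (qz * r) (ifs_f z w).
Proof.
move=> H e e0.
have [y [Ly Hy]] := H (e / qz) (divr_gt0 e0 hz0).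
exists (ifs_f z y); split; first exact: Lf.
rewrite cabs_fB; apply: le_trans (ler_wpM2l (ltW hz0) Hy) _.
by rewrite mulrDr mulrCA divff ?mulr1 // gt_eqF.
Qed.

Lemma NB_g r w : NB r w -> NB (qz * r) (ifs_g z w).
Proof.
move=> H e e0.
have [y [Ly Hy]] := H (e / qz) (divr_gt0 e0 hz0).
exists (ifs_g z y); split; first exact: Lg.
rewrite cabs_gB; apply: le_trans (ler_wpM2l (ltW hz0) Hy) _.
by rewrite mulrDr mulrCA divff ?mulr1 // gt_eqF.
Qed.

Lemma NB_bound r w : NB r w -> cabs w <= K + r.
Proof.
move=> H; apply/ler_addgt0Pr => e e0.
have [y [Ly Hy]] := H e e0.
have := hK Ly; have := cabsD (w - y) y; rewrite subrK; lra.
Qed.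

Lemma NB_pt r w y : L y -> cabs (w - y) <= r -> NB r w.
Proof. move=> Ly H e e0; exists y; split => //; lra. Qed.

Definition seg (a b : Cx) (t : R) : Cx := a + rC t * (b - a).

Lemma rC1 : rC 1 = 1 :> Cx.
Proof. by []. Qed.
Lemma rC0 : rC 0 = 0 :> Cx.
Proof. by []. Qed.

Lemma seg0 a b : seg a b 0 = a.
Proof. by rewrite /seg rC0 mul0r addr0. Qed.
Lemma seg1 a b : seg a b 1 = b.
Proof. by rewrite /seg rC1 mul1r addrC subrK. Qed.

Lemma ccont_seg a b : ccont (seg a b).
Proof. apply: ccontD; [exact: ccont_cst | exact: ccont_rC]. Qed.

Lemma seg_distl a b t : 0 <= t -> cabs (seg a b t - a) = t * cabs (b - a).
Proof. by move=> t0; rewrite /seg (addrC a) addrK cabsM cabs_real ger0_norm. Qed.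

Lemma seg_distr a b t : t <= 1 -> cabs (seg a b t - b) = (1 - t) * cabs (b - a).
Proof.
move=> t1.
have -> : seg a b t - b = - ((1 - rC t) * (b - a)) by rewrite /seg; ring.
by rewrite cabsN -rC1 rCB cabsM cabs_real ger0_norm // subr_ge0.
Qed.

Lemma NB_seg t : 0 <= t <= 1 -> NB (delta / 2) (seg p q t).
Proof.
move=> /andP[t0 t1].
case: (leP t (1/2)) => th.
- apply: (NB_pt pL); rewrite seg_distl // cabsB hpq.
  have := delta0; nra.
- apply: (NB_pt qL); rewrite seg_distr // cabsB hpq.
  have := delta0; nra.
Qed.


Definition P1 (F : Cx -> R -> Cx) t := ifs_f z (F (p / z) t).
Definition P3 (F : Cx -> R -> Cx) t := ifs_g z (F ((q - 1) / z + 1) (1 - t)).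
Definition P4 (F : Cx -> R -> Cx) x t := ifs_g z (F ((x - 1) / z + 1) t).

Definition Phi (F : Cx -> R -> Cx) (x : Cx) : R -> Cx :=
  if `[< L (x / z) >] then (fun t => ifs_f z (F (x / z) t))
  else concat (concat (P1 F) (seg p q)) (concat (P3 F) (P4 F x)).

Definition Inv (r : R) (F : Cx -> R -> Cx) := forall x, L x ->
  [/\ ccont (F x), F x 0 = 0, F x 1 = x & forall t, 0 <= t <= 1 -> NB r (F x t)].

Lemma ends r F x : Inv r F -> L ((x - 1) / z + 1) ->
  [/\ P1 F 1 = seg p q 0, P3 F 1 = P4 F x 0 &
      concat (P1 F) (seg p q) 1 = concat (P3 F) (P4 F x) 0].
Proof.
move=> IF Ly.
have [ca a0 a1 nba] := IF _ hpL.
have [cb b0 b1 nbb] := IF _ hqL.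
have [cy y0 y1 nby] := IF _ Ly.
have e2 : P3 F 1 = P4 F x 0 by rewrite /P3 /P4 subrr b0 y0.
split => //; first by rewrite /P1 a1 fK seg0.
by rewrite concat1 concat0 // seg1 /P3 subr0 b1 gK.
Qed.

Lemma in01N (t : R) : 0 <= t <= 1 -> 0 <= 1 - t <= 1.
Proof. by move=> /andP[? ?]; apply/andP; split; lra. Qed.

Lemma Inv_Phi r r' F : Inv r F -> qz * r <= r' -> delta / 2 <= r' -> Inv r' (Phi F).
Proof.
move=> IF h1 h2 x Lx; rewrite /Phi; case: asboolP => [Lxz|nLxz].
  have [c0 e0 e1 nb] := IF _ Lxz; split.
  - by rewrite /ifs_f; exact: ccontM.
  - by rewrite /ifs_f e0 mulr0.
  - by rewrite e1 fK.
  - move=> t tt; apply: NB_mono h1 _; exact: NB_f (nb t tt).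
have Ly : L ((x - 1) / z + 1) by case: (Lfg Lx).
have [ca a0 a1 nba] := IF _ hpL.
have [cb b0 b1 nbb] := IF _ hqL.
have [cy y0 y1 nby] := IF _ Ly.
have [e1 e2 e3] := ends IF Ly.
split.
- apply: ccont_concat; apply: ccont_concat.
  + rewrite /P1 /ifs_f; exact: ccontM.
  + exact: ccont_seg.
  + rewrite /P3 /ifs_g; apply: ccontD; last exact: ccont_cst.
    apply: ccontM; apply: ccontD; last exact: ccont_cst.
    apply: (ccont_comp cb ltr01) => s t.
    rewrite mul1r (_ : 1 - s - (1 - t) = t - s); last by ring.
    by rewrite distrC.
  + rewrite /P4 /ifs_g; apply: ccontD; last exact: ccont_cst.
    apply: ccontM; apply: ccontD; last exact: ccont_cst.
    exact: cy.
- by rewrite concat0 // concat0 // /P1 a0 /ifs_f mulr0.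
- by rewrite concat1 concat1 /P4 y1 gK.
- move=> t tt; have [s ss [Hs|Hs]] := concat_split tt.
  + rewrite (Hs _ _ e3); have [s' ss' [Hs'|Hs']] := concat_split ss.
    * rewrite (Hs' _ _ e1) /P1; apply: NB_mono h1 _; exact: NB_f (nba _ ss').
    * rewrite Hs'; apply: NB_mono h2 _; exact: NB_seg.
  + rewrite Hs; have [s' ss' [Hs'|Hs']] := concat_split ss.
    * rewrite (Hs' _ _ e2) /P3; apply: NB_mono h1 _; apply: NB_g; apply: nbb.
      exact: in01N.
    * rewrite Hs' /P4; apply: NB_mono h1 _; exact: NB_g (nby _ ss').
Qed.

Definition Dist (M : R) (F G : Cx -> R -> Cx) := forall x, L x ->
  forall t, 0 <= t <= 1 -> cabs (F x t - G x t) <= M.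

Lemma Phi_contr r r2 M F G : Inv r F -> Inv r2 G -> 0 <= M -> Dist M F G ->
  Dist (qz * M) (Phi F) (Phi G).
Proof.
move=> IF IG M0 D x Lx t tt; rewrite /Phi; case: asboolP => [Lxz|nLxz].
  by rewrite cabs_fB ler_pM2l // D.
have Ly : L ((x - 1) / z + 1) by case: (Lfg Lx).
have [e1 e2 e3] := ends IF Ly.
have [f1 f2 f3] := ends IG Ly.
have hM : 0 <= qz * M by rewrite mulr_ge0 // ltW.
have [s ss [Hs|Hs]] := concat_split tt.
+ rewrite (Hs _ _ e3) (Hs _ _ f3); have [s' ss' [Hs'|Hs']] := concat_split ss.
  * rewrite (Hs' _ _ e1) (Hs' _ _ f1) /P1 cabs_fB ler_pM2l // D //.
  * by rewrite !Hs' subrr cabs0.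
+ rewrite !Hs; have [s' ss' [Hs'|Hs']] := concat_split ss.
  * rewrite (Hs' _ _ e2) (Hs' _ _ f2) /P3 cabs_gB ler_pM2l // D //.
    exact: in01N.
  * rewrite !Hs' /P4 cabs_gB ler_pM2l // D //.
Qed.


Definition F0 (x : Cx) (t : R) : Cx := rC t * x.
Definition Fs (n : nat) := iter n Phi F0.

Lemma Inv_F0 : Inv (delta / 2 + K) F0.
Proof.
move=> x Lx; split.
- exact: ccont_rC.
- by rewrite /F0 rC0 mul0r.
- by rewrite /F0 rC1 mul1r.
- move=> t /andP[t0 t1]; apply: (NB_pt Lx).
  have -> : F0 x t - x = - ((1 - rC t) * x) by rewrite /F0; ring.
  rewrite cabsN -rC1 rCB cabsM cabs_real ger0_norm ?subr_ge0 //.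
  have := cabs_ge0 x; have := hK Lx; have := delta0; nra.
Qed.

Lemma Inv_Fs n : Inv (delta / 2 + qz ^+ n * K) (Fs n).
Proof.
elim: n => [|n IH]; first by rewrite expr0 mul1r; exact: Inv_F0.
rewrite /Fs iterS; apply: (Inv_Phi IH).
- rewrite exprS -mulrA mulrDr lerD2r ler_piMl //; first by have := delta0; lra.
  exact: ltW.
- rewrite lerDl mulr_ge0 // exprn_ge0 // ltW //.
Qed.

Lemma qzn_le1 n : qz ^+ n <= 1.
Proof. by rewrite exprn_ile1 // ltW. Qed.

Lemma Inv_Fs' n : Inv (delta / 2 + K) (Fs n).
Proof.
move=> x Lx; have [a b c d] := Inv_Fs n Lx; split => // t tt.
apply: NB_mono (d t tt); rewrite lerD2l.
by rewrite ler_piMl // qzn_le1.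
Qed.

Definition M0 := 2 * (K + (delta / 2 + K)).

Lemma M0_ge0 : 0 <= M0.
Proof. have := delta0; have := hK0; rewrite /M0; lra. Qed.

Lemma Dist1 : Dist M0 (Fs 1) (Fs 0).
Proof.
move=> x Lx t tt.
have [_ _ _ n1] := Inv_Fs' 1 Lx; have [_ _ _ n0] := Inv_Fs' 0 Lx.
have b1 := NB_bound (n1 t tt); have b0 := NB_bound (n0 t tt).
apply: le_trans (cabsD _ _) _; rewrite cabsN /M0; lra.
Qed.

Lemma DistS n : Dist (qz ^+ n * M0) (Fs n.+1) (Fs n).
Proof.
elim: n => [|n IH]; first by rewrite expr0 mul1r; exact: Dist1.
rewrite exprS -mulrA.
apply: (Phi_contr (Inv_Fs n.+1) (Inv_Fs n)) => //.
by rewrite mulr_ge0 ?exprn_ge0 ?M0_ge0 // ltW.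
Qed.

Definition C := M0 / (1 - qz).

Lemma C_ge0 : 0 <= C.
Proof. by rewrite /C divr_ge0 ?M0_ge0 // subr_ge0 ltW. Qed.

Lemma DistC n k : Dist (C * (qz ^+ n - qz ^+ (n + k))) (Fs (n + k)) (Fs n).
Proof.
elim: k => [|k IH] x Lx t tt.
  by rewrite addn0 !subrr cabs0 mulr0.
have e : C * (qz ^+ n - qz ^+ (n + k.+1)) =
         qz ^+ (n + k) * M0 + C * (qz ^+ n - qz ^+ (n + k)).
  rewrite addnS exprS /C; field.
  by rewrite subr_eq0 gt_eqF.
rewrite e; have -> : Fs (n + k.+1) x t - Fs n x t =
  (Fs (n + k).+1 x t - Fs (n + k) x t) + (Fs (n + k) x t - Fs n x t).
  by rewrite addnS addrA subrK.
apply: le_trans (cabsD _ _) _; apply: lerD; first exact: DistS.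
exact: IH.
Qed.

Lemma DistC' n m : (n <= m)%N -> Dist (C * qz ^+ n) (Fs m) (Fs n).
Proof.
move=> nm x Lx t tt; rewrite -(subnKC nm).
apply: le_trans (DistC _ _ Lx tt) _.
apply: ler_wpM2l; first exact: C_ge0.
by rewrite lerBlDr lerDl exprn_ge0 // ltW.
Qed.

Definition Finf (x : Cx) (t : R) : Cx := climit qz C (fun n => Fs n x t).

Lemma Finf_bound x t n : L x -> 0 <= t <= 1 ->
  cabs (Finf x t - Fs n x t) <= C * qz ^+ n + C * qz ^+ n.
Proof.
move=> Lx tt; apply: climitP; [exact: ltW|exact: ltW|exact: C_ge0|].
by move=> k m km; exact: DistC'.
Qed.

Lemma small_le0 (c D : R) : 0 <= D -> (forall n, c <= D * qz ^+ n) -> c <= 0.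
Proof.
move=> D0 H; apply/ler_addgt0Pr => e e0; rewrite add0r.
have D1 : 0 < D + 1 by lra.
have [n hn] := geo_small (ltW hz0) hz1 (divr_gt0 e0 D1).
apply: le_trans (H n) _.
have g : 0 <= qz ^+ n by rewrite exprn_ge0 // ltW.
rewrite ltr_pdivlMr // in hn.
have : D * qz ^+ n <= (D + 1) * qz ^+ n by rewrite ler_wpM2r //; lra.
rewrite mulrC in hn; lra.
Qed.


Lemma geo_small_mul (D e : R) : 0 <= D -> 0 < e -> exists n, D * qz ^+ n < e.
Proof.
move=> D0 e0.
have D1 : 0 < D + 1 by lra.
have [n hn] := geo_small (ltW hz0) hz1 (divr_gt0 e0 D1).
exists n.
have g : 0 <= qz ^+ n by rewrite exprn_ge0 // ltW.
rewrite ltr_pdivlMr // in hn.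
have : D * qz ^+ n <= (D + 1) * qz ^+ n by rewrite ler_wpM2r //; lra.
rewrite mulrC in hn; lra.
Qed.

Definition clamp (t : R) : R := Num.min (Num.max t 0) 1.

Lemma clamp01 t : 0 <= clamp t <= 1.
Proof.
rewrite /clamp; case: (leP t 0) => h; [case: (leP (0:R) 1) | case: (leP t 1)] => ?;
  apply/andP; split; lra.
Qed.

Lemma clamp_id t : 0 <= t <= 1 -> clamp t = t.
Proof.
move=> /andP[t0 t1]; rewrite /clamp.
have -> : Num.max t 0 = t by apply/max_idPl.
by apply/min_idPl.
Qed.

Lemma clamp_lip s t : `|clamp s - clamp t| <= `|s - t|.
Proof. apply: le_trans (lip_min _ _ _) _; exact: lip_max. Qed.

Lemma Finf_ends x : L x -> Finf x 0 = 0 /\ Finf x 1 = x.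
Proof.
move=> Lx.
have C2 : 0 <= C + C by have := C_ge0; lra.
have key (t : R) (v : Cx) : 0 <= t <= 1 -> (forall n, Fs n x t = v) -> Finf x t = v.
  move=> tt Hv; apply/eqP; rewrite -subr_eq0; apply/eqP; apply: cabs_eq0.
  apply/le_anti/andP; split; last exact: cabs_ge0.
  apply: (small_le0 C2) => n; rewrite mulrDl.
  by have := Finf_bound n Lx tt; rewrite Hv.
split; apply: key.
- by rewrite lexx ler01.
- by move=> n; have [] := Inv_Fs n Lx.
- by rewrite ler01 lexx.
- by move=> n; have [] := Inv_Fs n Lx.
Qed.

Lemma Finf_cont x : L x -> ccont (fun t => Finf x (clamp t)).
Proof.
move=> Lx t0 e e0.
have e3 : 0 < e / 3 by rewrite divr_gt0.
have C2 : 0 <= C + C by have := C_ge0; lra.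
have [n hn] := geo_small_mul C2 e3.
have [cn _ _ _] := Inv_Fs n Lx.
have [d d0 Hd] := cn (clamp t0) _ e3.
exists d => // t Ht.
have h1 := Finf_bound n Lx (clamp01 t).
have h2 := Finf_bound n Lx (clamp01 t0).
have h3 := Hd (clamp t) (le_lt_trans (clamp_lip _ _) Ht).
set a := Finf x (clamp t); set b := Finf x (clamp t0).
set u := Fs n x (clamp t); set v := Fs n x (clamp t0).
have -> : a - b = (a - u) + ((u - v) + (v - b)) by rewrite !addrA !subrK.
apply: le_lt_trans (cabsD _ _) _.
have := cabsD (u - v) (v - b); rewrite (cabsB v b).
rewrite mulrDl in hn; lra.
Qed.

Lemma Finf_NB x t : L x -> 0 <= t <= 1 -> NB (delta / 2) (Finf x t).
Proof.
move=> Lx tt e e0.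
have e2 : 0 < e / 2 by rewrite divr_gt0.
have D0 : 0 <= C + C + K by have := C_ge0; have := hK0; lra.
have [n hn] := geo_small_mul D0 e2.
have [_ _ _ nbn] := Inv_Fs n Lx.
have [y [Ly Hy]] := nbn t tt _ e2.
exists y; split => //.
have h1 := Finf_bound n Lx tt.
have -> : Finf x t - y = (Finf x t - Fs n x t) + (Fs n x t - y) by rewrite addrA subrK.
apply: le_trans (cabsD _ _) _.
rewrite !mulrDl in hn; lra.
Qed.

Lemma paths_exist x : L x -> exists g : R -> Cx,
  [/\ ccont g, g 0 = 0, g 1 = x & forall t, 0 <= t <= 1 -> NB (delta / 2) (g t)].
Proof.
move=> Lx; have [e0 e1] := Finf_ends Lx.
exists (fun t => Finf x (clamp t)); split.
- exact: Finf_cont.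
- by rewrite clamp_id ?lexx ?ler01.
- by rewrite clamp_id ?lexx ?ler01.
- by move=> t tt; rewrite clamp_id //; exact: Finf_NB.
Qed.

End Main.

Section Final.
Variable R : realType.
Local Notation Cx := (Cplx R).

Lemma dist_attained (L : set Cx) (x : Cx) (r : R) : compact L -> L !=set0 ->
  dist_set x L <= r -> exists y, L y /\ cabs (x - y) <= r.
Proof.
move=> cL L0 H.
have cphi : continuous (fun y => cabs (x - y)).
  apply: lip_continuous => a b.
  have e : x - b = (x - a) + (a - b) by rewrite addrA subrK.
  have e' : x - a = (x - b) + (b - a) by rewrite addrA subrK.
  have h1 := cabsD (x - a) (a - b); have h2 := cabsD (x - b) (b - a).
  rewrite -e in h1; rewrite -e' in h2; rewrite (cabsB b a) in h2.
  rewrite ler_norml; apply/andP; split; lra.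
have [c cin hc] := compact_EVT_min L0 cL (continuous_subspaceT cphi).
exists c; split; first by move: cin; rewrite inE.
apply: le_trans H; apply: lb_le_inf.
  by case: L0 => w Lw; exists (cabs (x - w)); exists w.
move=> _ [y Ly <-]; apply: hc; exact: mem_set.
Qed.

Lemma NB_dist (L : set Cx) r w : NB L r w -> dist_set w L <= r.
Proof.
move=> H; apply/ler_addgt0Pr => e e0.
have [y [Ly Hy]] := H e e0; apply: le_trans Hy.
apply: ge_inf; last by exists y.
by exists 0 => _ [u _ <-]; exact: cabs_ge0.
Qed.

End Final.

Unset Implicit Arguments.
Set Strict Implicit.

Theorem lemma5p2p2 (R : realType) (z : Cplx R) (Lambda : set (Cplx R))
    (p q : Cplx R) (delta : R) :
  0 < cabs z < 1 ->
  compact Lambda -> Lambda !=set0 ->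
  Lambda = (ifs_f z) @` Lambda `|` (ifs_g z) @` Lambda ->
  ((ifs_f z) @` Lambda) p -> ((ifs_g z) @` Lambda) q ->
  cabs (p - q) = delta ->
  path_connected [set x : Cplx R | dist_set x Lambda <= delta / 2].
Proof.
move=> /andP[hz0 hz1] cL L0 eqL [a La ea] [b Lb eb] hpq.
have z0 : z != 0 by apply/eqP => z0; move: hz0; rewrite z0 cabs0 ltxx.
have Lf y : Lambda y -> Lambda (ifs_f z y) by move=> Ly; rewrite eqL; left; exists y.
have Lg y : Lambda y -> Lambda (ifs_g z y) by move=> Ly; rewrite eqL; right; exists y.
have Lfg x : Lambda x -> Lambda (x / z) \/ Lambda ((x - 1) / z + 1).
  rewrite {1}eqL => -[[y Ly <-]|[y Ly <-]].
  - by left; rewrite /ifs_f mulrC mulKf.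
  - by right; rewrite /ifs_g addrK mulrC mulKf // subrK.
have hpL : Lambda (p / z) by rewrite -ea /ifs_f mulrC mulKf.
have hqL : Lambda ((q - 1) / z + 1) by rewrite -eb /ifs_g addrK mulrC mulKf // subrK.
have ccabs : continuous (fun y : Cplx R => cabs y).
  apply: lip_continuous => u v.
  have e : u = (u - v) + v by rewrite subrK.
  have e' : v = (v - u) + u by rewrite subrK.
  have h1 := cabsD (u - v) v; have h2 := cabsD (v - u) u.
  rewrite -e in h1; rewrite -e' in h2; rewrite (cabsB v u) in h2.
  rewrite ler_norml; apply/andP; split; lra.
have [c cin hc] := compact_EVT_max L0 cL (continuous_subspaceT ccabs).
have hK : forall y, Lambda y -> cabs y <= cabs c by move=> y Ly; apply: hc; exact: mem_set.
have PE := paths_exist hz0 hz1 Lf Lg Lfg hpL hqL hpq hK (cabs_ge0 c).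
move=> x1 x2 Hx1 Hx2.
have [y1 [Ly1 d1]] := dist_attained cL L0 Hx1.
have [y2 [Ly2 d2]] := dist_attained cL L0 Hx2.
have [g1 [c1 g10 g11 n1]] := PE _ Ly1.
have [g2 [c2 g20 g21 n2]] := PE _ Ly2.
have E1 : seg x1 y1 1 = (fun t => g1 (1 - t)) 0 by rewrite seg1 subr0 g11.
have E2 : g2 1 = seg y2 x2 0 by rewrite seg0 g21.
have E3 : concat (seg x1 y1) (fun t => g1 (1 - t)) 1 = concat g2 (seg y2 x2) 0.
  by rewrite concat1 concat0 // subrr g10 g20.
have cr : ccont (fun t => g1 (1 - t)).
  apply: (ccont_comp c1 ltr01) => s t.
  rewrite mul1r (_ : 1 - s - (1 - t) = t - s); last by ring.
  by rewrite distrC.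
exists (concat (concat (seg x1 y1) (fun t => g1 (1 - t))) (concat g2 (seg y2 x2))).
split; [|split; [|split]].
- apply: continuous_subspaceT; apply: ccont_continuous.
  apply: ccont_concat; apply: ccont_concat => //; exact: ccont_seg.
- by rewrite concat0 // concat0 // seg0.
- by rewrite concat1 concat1 seg1.
- move=> t; rewrite /= in_itv /= => tt.
  apply: (NB_dist (L := Lambda)).
  have [s ss [Hs|Hs]] := concat_split tt.
  + rewrite (Hs _ _ E3); have [s' ss' [Hs'|Hs']] := concat_split ss.
    * rewrite (Hs' _ _ E1); apply: (NB_pt Ly1).
      move: ss' => /andP[s0 s1].
      rewrite seg_distr // cabsB.
      have := cabs_ge0 (x1 - y1); have := delta0 hpq; nra.
    * rewrite Hs'; apply: n1; exact: in01N.
  + rewrite Hs; have [s' ss' [Hs'|Hs']] := concat_split ss.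
    * rewrite (Hs' _ _ E2); exact: n2.
    * rewrite Hs'; apply: (NB_pt Ly2).
      move: ss' => /andP[s0 s1].
      rewrite seg_distl // cabsB.
      have := cabs_ge0 (y2 - x2); have := delta0 hpq; rewrite cabsB in d2; nra.
Qed.
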